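(* Let $k$ be a number field, $\mathcal G$ a finite group, $H$ a finite abelian group, $\mu:\mathcal G\to\mathrm{Aut}(H)$ an action, $k_1/k$ a Galois extension with group identified with $\mathcal G$, and $\tau\in H$. Then $E_{k,\mu,\tau}\subseteq Z_{k_1/k,\mu,\tau}\cap k(\zeta_{o(\tau)})$, with equality if $k_1\cap k(\zeta_{o(\tau)})=k$.
   Context: $o(\tau)$ is the order of $\tau$ and $\zeta_t$ a primitive $t$-th root of unity. Let $\nu_{k,\tau}:\mathrm{Gal}(k(\zeta_{o(\tau)})/k)\to(\mathbb Z/o(\tau))^*$ be given by $g(\zeta_{o(\tau)})=\zeta_{o(\tau)}^{\nu_{k,\tau}(g)}$; $\tilde G_{k,\mu,\tau}=\{(g_1,g_2)\in\mathcal G\times\mathrm{Gal}(k(\zeta_{o(\tau)})/k):\mu(g_1)(\tau)=\tau^{\nu_{k,\tau}(g_2)}\}$; $G_{k,\mu,\tau}$ is the set of $g_2$ with $(g_1,g_2)\in\tilde G_{k,\mu,\tau}$ for some $g_1$, and $E_{k,\mu,\tau}$ is its fixed field in $k(\zeta_{o(\tau)})$. Identify $\mathrm{Gal}(k_1(\zeta_{o(\tau)})/k)$ with its image in $\mathcal G\times\mathrm{Gal}(k(\zeta_{o(\tau)})/k)$ via $g\mapsto(g|_{k_1},g|_{k(\zeta_{o(\tau)})})$, put $\tilde G_{k_1/k,\mu,\tau}=\tilde G_{k,\mu,\tau}\cap\mathrm{Gal}(k_1(\zeta_{o(\tau)})/k)$, and let $Z_{k_1/k,\mu,\tau}$ be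 its fixed field in $k_1(\zeta_{o(\tau)})$. *)

(* Defs.v *)
From HB Require Import structures.
From mathcomp Require Import all_boot all_order all_algebra all_fingroup all_solvable all_field.
Set Implicit Arguments. Unset Strict Implicit. Unset Printing Implicit Defensive.
Import GRing.Theory.
Local Open Scope ring_scope.

(* Ambient field: L is a finite Galois (splitting) extension of Q, so every
   subfield of L is a number field.  k, k1 : {subfield L}; z plays zeta_{o(tau)}. *)
Section Defs.
Variables (L : splittingFieldType rat) (hT : finGroupType).

Definition nu (z : L) (n : nat) (V : {vspace L}) (g : gal_of V) : nat :=
  index (g z) (mkseq (fun i => z ^+ i) n).

Definition tGcond (k1 : {vspace L}) (mu : gal_of k1 -> {perm hT}) (tau : hT)
  (z : L) (V : {vspace L}) (g1 : gal_of k1) (g2 : gal_of V) : bool :=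
  (mu g1 tau == tau ^+ nu z #[tau]%g g2)%g.

(* G_{k,mu,tau} : projection of tilde G to Gal(k(z)/k) *)
Definition Gkmt (k k1 : {subfield L}) (mu : gal_of k1 -> {perm hT}) (tau : hT)
  (z : L) : {set gal_of <<k; z>>%AS} :=
  [set g2 in 'Gal(<<k; z>>%AS / k)%g |
     [exists g1 in 'Gal(k1 / k)%g, tGcond mu tau z g1 g2]].

Definition Ekmt (k k1 : {subfield L}) (mu : gal_of k1 -> {perm hT}) (tau : hT)
  (z : L) : {vspace L} := fixedField (Gkmt k mu tau z).

(* tilde G_{k1/k,mu,tau} : elements g of Gal(k1(z)/k) with (g|k1, g|k(z)) in tilde G *)
Definition Gk1kmt (k k1 : {subfield L}) (mu : gal_of k1 -> {perm hT}) (tau : hT)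
  (z : L) : {set gal_of <<k1; z>>%AS} :=
  [set g in 'Gal(<<k1; z>>%AS / k)%g |
     tGcond mu tau z (gal k1 g) (gal <<k; z>>%AS g)].

Definition Zk1kmt (k k1 : {subfield L}) (mu : gal_of k1 -> {perm hT}) (tau : hT)
  (z : L) : {vspace L} := fixedField (Gk1kmt k mu tau z).
End Defs.

(* Main.v *)
Require Import Defs.
From HB Require Import structures.
From mathcomp Require Import all_boot all_order all_algebra all_fingroup all_solvable all_field.
Import GRing.Theory.
Local Open Scope ring_scope.

Section H.
Variable L : splittingFieldType rat.

Lemma char0L : has_char0 L.
Proof. by move=> p; rewrite (pchar_lalg L) Num.Theory.pchar_num. Qed.

Lemma sepL (K E : {subfield L}) : separable K E.
Proof. by apply/separableP => y _; apply: pcharf0_separable; exact: char0L. Qed.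

Lemma aut_prim (f : 'AEnd(L)) (z : L) n : n.-primitive_root z ->
  exists i, f z = z ^+ i.
Proof.
move=> pz; have : (f z) ^+ n = 1 by rewrite -GRing.rmorphXn (prim_expr_order pz) GRing.rmorph1.
by case/(prim_rootP pz) => i ->; exists i.
Qed.

Lemma normal_refl (K : {subfield L}) : normalField K K.
Proof.
apply/forall_inP => g; rewrite inE kAutfE => homKg.
by have [_ /fixedSpace_limg->] := andP homKg.
Qed.

Lemma normal_adj (K M : {subfield L}) z n : n.-primitive_root z ->
  normalField K M -> normalField K <<M; z>>%AS.
Proof.
move=> pz nKM; apply/forall_inP => g gK.
have gM : (g @: M)%VS == M by exact: (forall_inP nKM).
have sub : (g @: <<M; z>>%AS <= <<M; z>>%AS)%VS.
  rewrite aimg_adjoin (eqP gM); apply/FadjoinP; split; first exact: subv_adjoin.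
  by have [i ->] := @aut_prim g z n pz; rewrite rpredX // memv_adjoin.
by rewrite -dimv_leqif_eq ?limg_dim_eq ?(eqP (AEnd_lker0 g)) ?capv0.
Qed.
End H.

Theorem mainTheorem14 (L : splittingFieldType rat) (k k1 : {subfield L})
  (hT : finGroupType) (H : {group hT})
  (mu : {morphism 'Gal(k1 / k)%g >-> {perm hT}}) (tau : hT) (z : L) :
  galois k k1 ->
  abelian H ->
  (mu @* 'Gal(k1 / k) \subset Aut H)%g ->
  tau \in H ->
  (#[tau]%g).-primitive_root z ->
  (Ekmt k mu tau z <= Zk1kmt k mu tau z :&: <<k; z>>)%VS /\
  ((k1 :&: <<k; z>>)%VS = k ->
     Ekmt k mu tau z = (Zk1kmt k mu tau z :&: <<k; z>>)%VS).
Proof.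
move=> galk1 _ _ _ pz.
have /and3P[sk_k1 _ nk1] := galk1.
set E := <<k1; z>>%AS; set M := <<k; z>>%AS.
have nE : normalField k E by exact: (@normal_adj _ k k1 z _ pz nk1).
have nM : normalField k M.
  have := @normal_adj _ k k z _ pz (normal_refl _ k). exact.
have skE : (k <= E)%VS := subv_trans sk_k1 (subv_adjoin k1 z).
have galE : galois k E by rewrite /galois skE sepL nE.
have sME : (M <= E)%VS by apply: adjoinSl.
have skM : (k <= M)%VS := subv_adjoin k z.
have skME : (k <= M <= E)%VS by rewrite skM sME.
have sk1E : (k <= k1 <= E)%VS by rewrite sk_k1 subv_adjoin.
have part1 : (Ekmt k mu tau z <= Zk1kmt k mu tau z :&: <<k; z>>)%VS.
  apply/subvP => x Ex; have [xM fixx] := mem_fixedFieldP Ex.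
  rewrite memv_cap xM andbT; apply/fixedFieldP; first exact: (subvP sME).
  move=> g; rewrite inE => /andP[gE cond].
  have g2G : gal M g \in Gkmt k mu tau z.
    rewrite inE; apply/andP; split.
      rewrite -(normalField_img galE skME nM).
      exact: (mem_morphim (normalField_cast_morphism skME nM) gE gE).
    apply/existsP; exists (gal k1 g); rewrite cond andbT.
    rewrite -(normalField_img galE sk1E nk1).
    exact: (mem_morphim (normalField_cast_morphism sk1E nk1) gE gE).
  by rewrite -(normalField_cast_eq skME nM gE xM); apply: fixx.
split => // capk.
apply/eqP; rewrite eqEsubv part1 /=.
apply/subvP => x /memv_capP [xZ xM].
have [xE fixZ] := mem_fixedFieldP xZ.
apply/fixedFieldP => // g2; rewrite inE => /andP[g2G /existsP[g1 /andP[g1G cond]]].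
have homg2 : kHom k M g2 by rewrite -gal_kHom.
have [g' g'E Dg'] := kHom_to_gal skME nE homg2.
pose cast1 := normalField_cast_morphism sk1E nk1.
set a := gal k1 g'.
have aG : a \in 'Gal(k1 / k)%g.
  rewrite -(normalField_img galE sk1E nk1).
  exact: (mem_morphim cast1 g'E g'E).
have galME : galois M E by apply: galoisS galE; rewrite skM sME.
have sub : ('Gal(k1 / k) \subset cast1 @* 'Gal(E / M))%g.
  suff sF : (fixedField (cast1 @* 'Gal(E / M))%G <= k)%VS.
    by have := galS k1 sF; rewrite gal_fixedField.
  apply/subvP => w wF; rewrite -capk.
  have [wk1 fixw] := mem_fixedFieldP wF.
  rewrite memv_cap wk1 /=.
  rewrite -(galois_fixedField galME); apply/fixedFieldP; first exact: (subvP (subv_adjoin k1 z)).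
  move=> h hG; have hGk : h \in 'Gal(E / k)%g by apply: (subsetP (galS E skM)).
  rewrite -(normalField_cast_eq sk1E nk1 hGk wk1); apply: fixw.
  exact: (mem_morphim cast1 hGk hG).
have bG : (a^-1 * g1)%g \in 'Gal(k1 / k)%g by rewrite groupM ?groupV.
have /morphimP[h hGk hG Dh] := subsetP sub _ bG.
have hGk' : h \in 'Gal(E / k)%g by apply: (subsetP (galS E skM)).
have gE : (g' * h)%g \in 'Gal(E / k)%g by rewrite groupM.
have e1 : gal k1 (g' * h)%g = g1.
  have := normalField_castM sk1E nk1 g'E hGk'.
  rewrite /normalField_cast => ->.
  by rewrite -[gal k1 h]/(cast1 h) -Dh mulKVg.
have e2 : gal M (g' * h)%g = g2.
  apply/eqP/gal_eqP => w wM.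
  rewrite (normalField_cast_eq skME nM gE wM) galM ?(subvP sME) //.
  rewrite -Dg' //; apply: (fixed_gal sME hG); exact: memv_gal.
have gZ : (g' * h)%g \in Gk1kmt k mu tau z by rewrite inE gE /= e1 e2.
by rewrite -e2 (normalField_cast_eq skME nM gE xM) fixZ.
Qed.
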